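(* Let $h,b>0$, $\rho=b/(h+b)$, cost $c(x,d)=h(x-d)^++b(d-x)^+$. For $\theta\in[0,1/2]$ let $F_{\theta,1}$ be the CDF of the uniform distribution on $[\theta,1]$, and let $\mathcal F_u=\{F_{\theta,1}:\theta\in[0,1/2]\}$. For a demand CDF $F$ let $C_F(x)=\mathbb{E}_{D\sim F}[c(x,D)]$ and $x_F^*=\arg\min_xC_F(x)$. An admissible policy $\pi=(\pi_t)_{t\ge1}$ maps, in period $t$, the history of $t$ i.i.d. demand samples $(d_1,\dots,d_t)$ from $F$ to an order quantity $x_t^\pi$; let $\Pi$ be the set of admissible policies and $\mathcal R^\pi(F,T)=\sum_{t=1}^T\mathbb{E}[C_F(x_t^\pi)-C_F(x_F^* )]$. Then for every $T\ge1$, $$\inf_{\pi\in\Pi}\sup_{F\in\mathcal F_u}\mathcal R^\pi(F,T)\le(\rho^2+(1-\rho)^2)(h+b).$$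
   Context: Data-driven repeated newsvendor problem with linear overage cost $h$ and underage cost $b$; expectations are over demand samples and any randomness of the policy. *)

(* Defs.v *)
From HB Require Import structures.
From mathcomp Require Import all_boot all_order all_algebra.
From mathcomp Require Import all_classical all_reals all_analysis.
Set Implicit Arguments. Unset Strict Implicit. Unset Printing Implicit Defensive.
Import Order.TTheory GRing.Theory Num.Theory.
Local Open Scope classical_set_scope.
Local Open Scope ring_scope.

Section newsvendor.
Context (R : realType).
Local Notation mu := (@lebesgue_measure R).

Definition nv_cost (h b x d : R) : R :=
  h * Num.max (x - d) 0 + b * Num.max (d - x) 0.

Definition unifE (theta : R) (g : R -> \bar R) : \bar R :=
  (\int[mu]_x ((uniform_pdf theta 1 x)%:E * g x))%E.

(* expectation over t i.i.d. Uniform[theta,1] samples (d_1,...,d_t),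
   written as an iterated integral (equal to the product-measure integral
   by Tonelli for nonnegative measurable integrands) *)
Fixpoint iidE (theta : R) (t : nat) : (t.-tuple R -> \bar R) -> \bar R :=
  match t return (t.-tuple R -> \bar R) -> \bar R with
  | 0 => fun g => g [tuple]
  | t'.+1 => fun g => unifE theta (fun x => iidE theta (fun s => g (cons_tuple x s)))
  end.

Definition expCost (h b theta x : R) : \bar R :=
  unifE theta (fun d => (nv_cost h b x d)%:E).

Definition optCost (h b theta : R) : \bar R :=
  ereal_inf (range (expCost h b theta)).

Definition policy := forall t : nat, t.-tuple R -> R.

Definition admissible : set policy :=
  [set pi | forall t, measurable_fun setT (pi t)].

Definition regret (h b : R) (pi : policy) (theta : R) (T : nat) : \bar R :=
  (\sum_(1 <= t < T.+1)
     iidE theta (fun s : t.-tuple R => expCost h b theta (pi t s) - optCost h b theta))%E.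

Definition worst_regret (h b : R) (pi : policy) (T : nat) : \bar R :=
  ereal_sup [set regret h b pi theta T | theta in `[0, 2^-1]].

Definition minimax_regret (h b : R) (T : nat) : \bar R :=
  ereal_inf [set worst_regret h b pi T | pi in admissible].

End newsvendor.

(* Main.v *)
Require Import Defs.
From HB Require Import structures.
From mathcomp Require Import all_boot all_order all_algebra.
From mathcomp Require Import all_classical all_reals all_analysis.
From mathcomp Require Import measurable_realfun.
From mathcomp.algebra_tactics Require Import ring lra.
Import Order.TTheory GRing.Theory Num.Theory numFieldNormedType.Exports.
Local Open Scope classical_set_scope.
Local Open Scope ring_scope.

Section proof.
Context (R : realType).
Local Notation mu := (@lebesgue_measure R).

Lemma nn_le_integral (f g : R -> \bar R) :
  (forall x, 0 <= f x)%E -> (forall x, f x <= g x)%E ->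
  (\int[mu]_x f x <= \int[mu]_x g x)%E.
Proof.
move=> f0 fg.
have g0 x : (0 <= g x)%E by apply: le_trans (f0 x) (fg x).
rewrite [X in (X <= _)%E]ge0_integralTE // [X in (_ <= X)%E]ge0_integralTE //.
apply: ereal_sup_le => _ [h /= hf <-]; exists h => //= x.
exact: le_trans (hf x) (fg x).
Qed.

Lemma ftc_poly (P : {poly R}) (f : R -> R) a c : a <= c ->
  (forall x, a <= x <= c -> f x = (P^`()).[x]) ->
  (\int[mu]_(x in `[a, c]) (f x)%:E = (P.[c] - P.[a])%:E)%E.
Proof.
move=> ac fP.
have [eac|lac] := eqVneq a c.
  subst c; rewrite set_itv1 integral_set1 subrr //.
have {lac ac} ac : a < c by rewrite lt_neqAle lac ac.
transitivity (\int[mu]_(x in `[a, c]) ((P^`()).[x])%:E)%E.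
  by apply: eq_integral => x; rewrite inE /= in_itv /= => /fP ->.
rewrite (continuous_FTC2 (F := horner P) ac).
- by rewrite EFinB.
- by apply: continuous_subspaceT => x; exact: continuous_horner.
- split.
  + by move=> x _; exact: derivable_horner.
  + apply: cvg_at_right_filter; exact: continuous_horner.
  + apply: cvg_at_left_filter; exact: continuous_horner.
- by move=> x _; rewrite -derivE.
Qed.


Definition inbox (th : R) {n} (s : n.-tuple R) := all (fun x => th <= x <= 1) s.

Lemma unifE_itv (th : R) (g : R -> \bar R) : th < 1 ->
  unifE th g = (\int[mu]_(x in `[th, 1%R]) ((1 - th)^-1%:E * g x))%E.
Proof.
move=> th1; rewrite /unifE [RHS]integral_mkcond; apply: eq_integral => x _.
rewrite patchE /uniform_pdf.
have -> : (x \in `[th, 1%R]%classic) = (th <= x <= 1) by apply/idP/idP => [/set_mem|H]; [rewrite /= in_itv | apply/mem_set; rewrite /= in_itv].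
by case: ifPn => // _; rewrite mul0e.
Qed.

Lemma iidE_mono (th : R) t (f g : t.-tuple R -> \bar R) : th < 1 ->
  (forall s, inbox th s -> (0 <= f s)%E /\ (f s <= g s)%E) ->
  (0 <= iidE th f)%E /\ (iidE th f <= iidE th g)%E.
Proof.
move=> th1; elim: t f g => [|t IH] f g fg /=.
  by apply: fg.
have H x : th <= x <= 1 ->
    (0 <= iidE th (fun s => f (cons_tuple x s)))%E /\
    (iidE th (fun s => f (cons_tuple x s)) <= iidE th (fun s => g (cons_tuple x s)))%E.
  by move=> xin; apply: IH => s sin; apply: fg; rewrite /inbox /= xin.
have pdf0 x : 0 <= uniform_pdf th 1 x by apply: uniform_pdf_ge0.
have F0 x : (0 <= (uniform_pdf th 1 x)%:E * iidE th (fun s => f (cons_tuple x s)))%E.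
  rewrite /uniform_pdf; case: ifPn => [xin|_]; last by rewrite mul0e.
  by apply: mule_ge0; [rewrite lee_fin; move: (pdf0 x); rewrite /uniform_pdf xin | exact: (H x xin).1].
split; first by apply: integral_ge0 => x _; exact: F0.
apply: nn_le_integral => // x.
rewrite /uniform_pdf; case: ifPn => [xin|_]; last by rewrite !mul0e.
apply: lee_wpmul2l; first by rewrite lee_fin; move: (pdf0 x); rewrite /uniform_pdf xin.
exact: (H x xin).2.
Qed.


Lemma split_itv (f : R -> \bar R) (a m c : R) : a <= m -> m <= c ->
  measurable_fun setT f ->
  (\int[mu]_(x in `[a, c]) f x = \int[mu]_(x in `[a, m]) f x + \int[mu]_(x in `[m, c]) f x)%E.
Proof.
move=> am mc mf.
rewrite (@itv_bndbnd_setU _ _ (BLeft a) (BRight m) (BRight c)); last 2 first.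
- by rewrite bnd_simp.
- by rewrite bnd_simp.
rewrite integral_setU //; last 2 first.
- exact: measurable_funS mf.
- rewrite disj_set2E; apply/eqP; apply/seteqP; split => // z [] /=.
  by rewrite !in_itv /= => /andP[_ zm] /andP[mz _]; lra.
congr (_ + _)%E.
by rewrite integral_itv_obnd_cbnd //; exact: measurable_funS mf.
Qed.


Lemma measurable_cost (h b x : R) : measurable_fun setT (nv_cost h b x).
Proof.
rewrite /nv_cost; apply: measurable_funD; apply: measurable_funM => //;
  apply: measurable_maxr => //; apply: measurable_funB => //.
Qed.

Lemma expCost_in (h b th x : R) : th < 1 -> th <= x <= 1 ->
  expCost h b th x = ((h * (x - th) ^+ 2 + b * (1 - x) ^+ 2) / (2 * (1 - th)))%:E.
Proof.
move=> th1 /andP[thx x1].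
rewrite /expCost unifE_itv //.
set c := (1 - th)^-1.
under eq_integral do rewrite -EFinM.
rewrite (@split_itv _ _ x) //; last first.
  by apply/measurable_EFinP; apply: measurable_funM => //; exact: measurable_cost.
rewrite (@ftc_poly ((- (c * h / 2)) *: (x%:P - 'X) ^+ 2)) //; last first.
  move=> d /andP[thd dx].
  rewrite !(derivZ, deriv_exp, derivB, derivC, derivX) ?(hornerZ, horner_exp, hornerD, hornerN, hornerC, hornerX, hornerM, hornerMn) /nv_cost.
  rewrite (@max_l _ _ (x - d) 0) ?subr_ge0 // (@max_r _ _ (d - x) 0) ?subr_le0 //.
  by rewrite /=; field.
rewrite (@ftc_poly ((c * b / 2) *: ('X - x%:P) ^+ 2)) //; last first.
  move=> d /andP[xd d1].
  rewrite !(derivZ, deriv_exp, derivB, derivC, derivX) ?(hornerZ, horner_exp, hornerD, hornerN, hornerC, hornerX, hornerM, hornerMn) /nv_cost.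
  rewrite (@max_r _ _ (x - d) 0) ?subr_le0 // (@max_l _ _ (d - x) 0) ?subr_ge0 //.
  by rewrite /=; field.
rewrite -EFinD; congr EFin; rewrite ?(hornerZ, horner_exp, hornerD, hornerN, hornerC, hornerX, hornerM, hornerMn) /c.
have w0 : 1 - th != 0 by rewrite subr_eq0 gt_eqF.
field. exact: w0.
Qed.


Definition Qf (h b th x : R) := (h * (x - th) ^+ 2 + b * (1 - x) ^+ 2) / (2 * (1 - th)).

Lemma expCost_mono (h b th y z : R) : th < 1 ->
  (forall d, th <= d <= 1 -> 0 <= nv_cost h b z d <= nv_cost h b y d) ->
  (expCost h b th z <= expCost h b th y)%E.
Proof.
move=> th1 H; apply: nn_le_integral => x; rewrite /uniform_pdf;
  case: ifPn => [xin|_]; rewrite ?mul0e //.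
- have := H x xin => /andP[c0 _]; apply: mule_ge0; rewrite lee_fin //.
  by rewrite invr_ge0 subr_ge0 ltW.
- have := H x xin => /andP[_ c1]; apply: lee_wpmul2l; rewrite lee_fin //.
  by rewrite invr_ge0 subr_ge0 ltW.
Qed.

Lemma cost_bounds (h b y d : R) : 0 <= h -> 0 <= b ->
  [/\ 0 <= nv_cost h b y d, b * (d - y) <= nv_cost h b y d &
      h * (y - d) <= nv_cost h b y d].
Proof.
move=> h0 b0; rewrite /nv_cost.
set m1 := Num.max (y - d) 0; set m2 := Num.max (d - y) 0.
have m1a : y - d <= m1 by rewrite /m1 le_max lexx.
have m1b : 0 <= m1 by rewrite /m1 le_max lexx orbT.
have m2a : d - y <= m2 by rewrite /m2 le_max lexx.
have m2b : 0 <= m2 by rewrite /m2 le_max lexx orbT.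
split; nra.
Qed.

Lemma cost_in (h b y d : R) : y <= d -> nv_cost h b y d = b * (d - y).
Proof.
move=> yd; rewrite /nv_cost (@max_r _ _ (y - d) 0) ?subr_le0 //.
by rewrite (@max_l _ _ (d - y) 0) ?subr_ge0 // mulr0 add0r.
Qed.

Lemma cost_in2 (h b y d : R) : d <= y -> nv_cost h b y d = h * (y - d).
Proof.
move=> yd; rewrite /nv_cost (@max_l _ _ (y - d) 0) ?subr_ge0 //.
by rewrite (@max_r _ _ (d - y) 0) ?subr_le0 // mulr0 addr0.
Qed.

Lemma Qf_min (h b th y : R) : 0 < h -> 0 < b -> th < 1 ->
  Qf h b th y - Qf h b th (th + b / (h + b) * (1 - th)) =
  (h + b) / (2 * (1 - th)) * (y - (th + b / (h + b) * (1 - th))) ^+ 2.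
Proof.
move=> h0 b0 th1; rewrite /Qf.
have w0 : 1 - th != 0 by rewrite subr_eq0 gt_eqF.
have hb0 : h + b != 0 by rewrite gt_eqF // addr_gt0.
by field; rewrite w0 hb0.
Qed.

Lemma optCost_ge (h b th : R) : 0 < h -> 0 < b -> th < 1 ->
  ((Qf h b th (th + b / (h + b) * (1 - th)))%:E <= optCost h b th)%E.
Proof.
move=> h0 b0 th1; apply/ereal_infP => _ [y _ <-].
set xs := th + b / (h + b) * (1 - th).
have w0 : 0 < 1 - th by rewrite subr_gt0.
have Qge z : Qf h b th xs <= Qf h b th z.
  rewrite -subr_ge0 Qf_min //; apply: mulr_ge0; last exact: sqr_ge0.
  by rewrite divr_ge0 // ?mulr_ge0 // ltW // ?addr_gt0.
have [yth|thy] := ltP y th.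
  apply: le_trans (_ : (expCost h b th th <= _)%E).
    rewrite expCost_in //; last by rewrite lexx ltW.
    rewrite lee_fin; exact: Qge.
  apply: expCost_mono => // d /andP[thd d1].
  have [c0 c1 _] := cost_bounds h b y d (ltW h0) (ltW b0).
  rewrite cost_in //; apply/andP; split; first by rewrite mulr_ge0 ?subr_ge0 // ltW.
  apply: le_trans c1; apply: ler_wpM2l; [exact: ltW | lra].
have [y1|y1] := leP y 1.
  rewrite expCost_in //; last by rewrite thy y1.
  rewrite lee_fin; exact: Qge.
apply: le_trans (_ : (expCost h b th 1 <= _)%E).
  rewrite expCost_in //; last by rewrite lexx ltW.
  rewrite lee_fin; exact: Qge.
apply: expCost_mono => // d /andP[thd d1].
have [c0 _ c1] := cost_bounds h b y d (ltW h0) (ltW b0).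
rewrite cost_in2 //; apply/andP; split; first by rewrite mulr_ge0 ?subr_ge0 // ltW.
apply: le_trans c1; apply: ler_wpM2l; [exact: ltW | lra].
Qed.


Lemma unifE_mono (th : R) (F G : R -> \bar R) : th < 1 ->
  (forall x, th <= x <= 1 -> (0 <= F x)%E /\ (F x <= G x)%E) ->
  (unifE th F <= unifE th G)%E.
Proof.
move=> th1 H.
have pdf0 x : 0 <= uniform_pdf th 1 x by apply: uniform_pdf_ge0.
apply: nn_le_integral => x; rewrite /uniform_pdf;
  case: ifPn => [xin|_]; rewrite ?mul0e //.
- apply: mule_ge0; last exact: (H x xin).1.
  by rewrite lee_fin; move: (pdf0 x); rewrite /uniform_pdf xin.
- apply: lee_wpmul2l; last exact: (H x xin).2.
  by rewrite lee_fin; move: (pdf0 x); rewrite /uniform_pdf xin.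
Qed.

Lemma iidE_ge0 (th : R) t (f : t.-tuple R -> \bar R) : th < 1 ->
  (forall s, inbox th s -> (0 <= f s)%E) -> (0 <= iidE th f)%E.
Proof.
move=> th1 H; have := @iidE_mono th t f f th1; case => // s sin.
by split; [exact: H|exact: lexx].
Qed.

Definition Mn {n} (s : n.-tuple R) := \big[Num.min/1]_(i <- s) i.

Definition rr (th a : R) := (1 - th)^-1 * (1 - a).

Definition Bf (th : R) (t : nat) (a : R) :=
  2 * (1 - th) ^+ 2 * ((1 - rr th a ^+ t.+1) / t.+1%:R - (1 - rr th a ^+ t.+2) / t.+2%:R).

Definition qp (th : R) : {poly R} := (1 - th)^-1 *: (1 - 'X).

Definition Bp (th : R) (t : nat) : {poly R} :=
  (2 * (1 - th) ^+ 2) *: ((t.+1%:R)^-1 *: (1 - qp th ^+ t.+1) - (t.+2%:R)^-1 *: (1 - qp th ^+ t.+2)).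

Definition Pp (th : R) (t : nat) : {poly R} :=
  (2 * (1 - th) ^+ 2) *: ((t.+1%:R)^-1 *: ('X + ((1 - th) / t.+2%:R) *: qp th ^+ t.+2)
     - (t.+2%:R)^-1 *: ('X + ((1 - th) / t.+3%:R) *: qp th ^+ t.+3)).

Lemma qpE th x : (qp th).[x] = rr th x.
Proof. by rewrite /qp /rr hornerZ hornerD hornerN hornerX hornerC. Qed.

Lemma BpE th t x : (Bp th t).[x] = Bf th t x.
Proof.
rewrite /Bp /Bf ?(hornerZ, horner_exp, hornerD, hornerN, hornerC, hornerX).
by rewrite /rr; ring.
Qed.


Lemma deriv_qpow th k x :
  (((qp th) ^+ k.+1)^`()).[x] = - ((1 - th)^-1 * k.+1%:R) * (rr th x) ^+ k.
Proof.
rewrite deriv_exp hornerMn hornerM horner_exp qpE /qp derivZ hornerZ.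
rewrite -polyC1 derivB derivC derivX hornerD hornerN horner0 -polyC1 hornerC /=.
rewrite -mulr_natr; ring.
Qed.

Lemma PpE th t x : th < 1 -> ((Pp th t)^`()).[x] = Bf th t x.
Proof.
move=> th1.
have w0 : 1 - th != 0 by rewrite subr_eq0 gt_eqF.
rewrite /Pp; do 3! rewrite ?derivZ ?derivB ?derivD ?derivX.
do 3! rewrite ?hornerZ ?hornerD ?hornerN. rewrite !deriv_qpow -polyC1 hornerC /Bf.
set u := rr th x ^+ t.+1; set v := rr th x ^+ t.+2.
have n2 : t.+2%:R != 0 :> R by rewrite pnatr_eq0.
have n3 : t.+3%:R != 0 :> R by rewrite pnatr_eq0.
have n1 : t.+1%:R != 0 :> R by rewrite pnatr_eq0.
have t0 : 0 <= t%:R :> R := ler0n _ _.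
field; rewrite w0 /=.
by apply/and3P; split; rewrite gt_eqF //; lra.
Qed.


Lemma PpH th t x : (Pp th t).[x] = 2 * (1 - th) ^+ 2 *
  ((x + (1 - th) / t.+2%:R * rr th x ^+ t.+2) / t.+1%:R
   - (x + (1 - th) / t.+3%:R * rr th x ^+ t.+3) / t.+2%:R).
Proof.
rewrite /Pp; do 3! rewrite ?hornerZ ?hornerD ?hornerN.
rewrite !horner_exp !qpE hornerX; ring.
Qed.

Lemma rr1 th : th < 1 -> rr th th = 1.
Proof. by move=> th1; rewrite /rr mulVf // subr_eq0 gt_eqF. Qed.

Lemma Bf0 th a : th < 1 -> Bf th 0 a = (a - th) ^+ 2.
Proof.
move=> th1; have w0 : 1 - th != 0 by rewrite subr_eq0 gt_eqF.
by rewrite /Bf /rr; field.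
Qed.

Lemma Bf_step th t a : th < 1 ->
  (1 - th)^-1 * ((Pp th t).[a] - (Pp th t).[th]) + (1 - th)^-1 * Bf th t a * (1 - a)
  = Bf th t.+1 a.
Proof.
move=> th1; have w0 : 1 - th != 0 by rewrite subr_eq0 gt_eqF.
rewrite !PpH rr1 // !expr1n /Bf.
set r := rr th a.
have ha : a = 1 - (1 - th) * r by rewrite /r /rr; field.
clearbody r; subst a.
rewrite !exprS.
set u := r ^+ t.
have t0 : 0 <= t%:R :> R := ler0n _ _.
field; rewrite w0 /=.
by rewrite andbT; apply/and3P; split; rewrite gt_eqF //; lra.
Qed.

Lemma Mn_cons n x (s : n.-tuple R) : Mn (cons_tuple x s) = Num.min x (Mn s).
Proof. by rewrite /Mn /= big_cons. Qed.

Lemma Mn0 (s : 0.-tuple R) : Mn s = 1.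
Proof. by rewrite /Mn tuple0 /= big_nil. Qed.

Lemma G_bound th K t : th < 1 -> 0 <= K -> forall a, th <= a <= 1 ->
  (iidE th (fun s : t.-tuple R => (K * (Num.min a (Mn s) - th) ^+ 2)%:E)
    <= (K * Bf th t a)%:E)%E.
Proof.
move=> th1 K0; have w0 : 1 - th != 0 by rewrite subr_eq0 gt_eqF.
have w0' : 0 < 1 - th by rewrite subr_gt0.
elim: t => [|t IH] a /andP[tha a1] /=.
  by rewrite Mn0 (min_l a1) Bf0.
under eq_fun do under eq_fun do rewrite Mn_cons minA.
apply: (@le_trans _ _ (unifE th (fun x => (K * Bf th t (Num.min a x))%:E))).
  apply: unifE_mono => // x /andP[thx x1]; split.
    apply: iidE_ge0 => // s _; rewrite lee_fin; apply: mulr_ge0 => //; exact: sqr_ge0.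
  apply: IH; apply/andP; split.
    by rewrite le_min tha thx.
  by rewrite ge_min a1.
rewrite unifE_itv //; under eq_integral do rewrite -EFinM.
rewrite (@split_itv _ _ a) //; last first.
  apply/measurable_EFinP.
  apply: measurable_funM => //; apply: measurable_funM => //.
  rewrite (_ : (fun x => Bf th t (Num.min a x)) = horner (Bp th t) \o (fun x => Num.min a x)); last first.
    by apply/funext => x; rewrite /= BpE.
  apply: measurableT_comp; first by apply: continuous_measurable_fun => x; exact: continuous_horner.
  exact: measurable_minr.
rewrite (@ftc_poly (((1 - th)^-1 * K) *: Pp th t)) //; last first.
  move=> d /andP[thd da]; rewrite derivZ hornerZ PpE // (@min_r _ _ a d da).
  by rewrite mulrA.
rewrite (@ftc_poly (((1 - th)^-1 * (K * Bf th t a)) *: 'X)) //; last first.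
  move=> d /andP[ad d1]; rewrite derivZ derivX hornerZ -polyC1 hornerC mulr1.
  by rewrite (@min_l _ _ a d ad).
rewrite -EFinD lee_fin -Bf_step // !(hornerZ _ (Pp th t)) !(hornerZ _ 'X) !hornerX.
rewrite le_eqVlt; apply/orP; left; apply/eqP; ring.
Qed.

Lemma Mn_box th n (s : n.-tuple R) : th <= 1 -> inbox th s -> th <= Mn s <= 1.
Proof.
move=> th1; rewrite /Mn /inbox; elim: (tval s) => [|x l IH] /=.
  by rewrite big_nil th1 lexx.
rewrite big_cons => /andP[/andP[thx x1] /IH /andP[H1 H2]].
by rewrite le_min thx H1 ge_min x1.
Qed.

Lemma measurable_Mn n : measurable_fun setT (fun s : n.-tuple R => Mn s).
Proof.
rewrite /Mn; under eq_fun do rewrite big_tuple.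
elim: (index_enum _) => [|i r IH].
  under eq_fun do rewrite big_nil; exact: measurable_cst.
under eq_fun do rewrite big_cons /=.
apply: measurable_minr => //; exact: measurable_tnth.
Qed.

Lemma period_bound (h b th m : R) : 0 < h -> 0 < b -> th < 1 -> th <= m <= 1 ->
  (0 <= expCost h b th (m + b / (h + b) * (1 - m)) - optCost h b th)%E /\
  (expCost h b th (m + b / (h + b) * (1 - m)) - optCost h b th <=
   ((h + b) * (1 - b / (h + b)) ^+ 2 / (2 * (1 - th)) * (Num.min 1 m - th) ^+ 2)%:E)%E.
Proof.
move=> h0 b0 th1 /andP[thm m1].
set rho := b / (h + b).
have hb0 : 0 < h + b by rewrite addr_gt0.
have rho0 : 0 <= rho by rewrite divr_ge0 // ltW.
have rho1 : rho <= 1 by rewrite ler_pdivrMr // mul1r lerDr ltW.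
set x := m + rho * (1 - m).
have thx : th <= x by rewrite /x; nra.
have x1 : x <= 1 by rewrite /x; nra.
have E1 := @expCost_in h b th x th1 (introT andP (conj thx x1)).
have hi : (optCost h b th <= expCost h b th x)%E.
  by apply: ereal_inf_lbound; exists x.
have lo := @optCost_ge h b th h0 b0 th1.
rewrite E1 in hi *.
move: (optCost h b th) lo hi => q lo hi.
case: q lo hi => [q | | ] // lo hi.
rewrite -EFinB !lee_fin in lo hi *.
rewrite subr_ge0 hi; split => //.
rewrite (@min_r _ _ 1 m m1).
apply: (@le_trans _ _ (Qf h b th x - Qf h b th (th + b / (h + b) * (1 - th)))).
  by rewrite lerB.
rewrite Qf_min // -/rho.
have -> : x - (th + rho * (1 - th)) = (1 - rho) * (m - th) by rewrite /x; ring.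
rewrite le_eqVlt; apply/orP; left; apply/eqP; ring.
Qed.

Lemma tele T : \sum_(1 <= t < T.+1) ((t.+1%:R)^-1 - (t.+2%:R)^-1) = 2^-1 - (T.+2%:R)^-1 :> R.
Proof.
elim: T => [|T IH]; first by rewrite big_geq // subrr.
rewrite big_nat_recr //= IH.
by rewrite addrA subrK.
Qed.

Lemma Bf1 th t : th < 1 -> Bf th t 1 = 2 * (1 - th) ^+ 2 * ((t.+1%:R)^-1 - (t.+2%:R)^-1).
Proof.
move=> th1; rewrite /Bf /rr subrr mulr0 !expr0n /= subr0.
by rewrite !div1r.
Qed.

End proof.

Arguments Mn {R n}.
Arguments Bf {R}.
Arguments measurable_Mn {R}.
Arguments Mn_box {R th n}.
Arguments period_bound {R}.
Arguments G_bound {R th K t}.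
Arguments iidE_mono {R th t}.
Arguments Bf1 {R}.
Arguments tele {R}.

Theorem theoremD2 (R : realType) (h b : R) (T : nat) :
  0 < h -> 0 < b -> (1 <= T)%N ->
  let rho := b / (h + b) in
  (minimax_regret h b T <= ((rho ^+ 2 + (1 - rho) ^+ 2) * (h + b))%:E)%E.
Proof.
move=> h0 b0 _ /=; set rho := b / (h + b).
pose pi : policy R := fun t s => Mn s + rho * (1 - Mn s).
have adm : admissible pi.
  move=> t; apply: measurable_funD; first exact: measurable_Mn.
  apply: measurable_funM => //; apply: measurable_funB => //; exact: measurable_Mn.
apply: (@le_trans _ _ (worst_regret h b pi T)).
  by apply: ereal_inf_lbound; exists pi.
rewrite /worst_regret; apply: ge_ereal_sup => _ [th /= thin <-].
move: thin; rewrite in_itv /= => /andP[th0 th2].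
have th1 : th < 1 by apply: le_lt_trans th2 _; rewrite invf_lt1 // ltr1n.
have hb0 : 0 < h + b by rewrite addr_gt0.
set K := (h + b) * (1 - rho) ^+ 2 / (2 * (1 - th)).
have K0 : 0 <= K.
  have w0 : 0 < 1 - th by rewrite subr_gt0.
  rewrite /K; apply: divr_ge0; [apply: mulr_ge0; [exact: ltW | exact: sqr_ge0] | apply: mulr_ge0 => //; exact: ltW].


rewrite /regret.
apply: (@le_trans _ _ (\sum_(1 <= t < T.+1) (K * Bf th t 1)%:E)%E).
  apply: lee_sum => t _.
  apply: le_trans (G_bound th1 K0 1 (introT andP (conj (ltW th1) (lexx 1)))).
  apply: (proj2 (iidE_mono _ _ th1 _)) => s sin.
  have /andP[m0 m1] := Mn_box s (ltW th1) sin.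
  have := period_bound h b th (Mn s) h0 b0 th1 (introT andP (conj m0 m1)).
  by rewrite /pi.
rewrite sumEFin lee_fin.
under eq_bigr do rewrite Bf1 //.
have -> : \sum_(1 <= i < T.+1) (K * (2 * (1 - th) ^+ 2 * (i.+1%:R^-1 - i.+2%:R^-1)))
    = (h + b) * (1 - rho) ^+ 2 * (1 - th) * \sum_(1 <= i < T.+1) (i.+1%:R^-1 - i.+2%:R^-1).
  rewrite mulr_sumr; apply: eq_bigr => i _; rewrite /K.
  have w0 : 1 - th != 0 by rewrite subr_eq0 gt_eqF.
  set z := (i.+1%:R^-1 - i.+2%:R^-1); set y := (1 - rho) ^+ 2.
  clearbody z y; field; exact: w0.
rewrite tele.
have e0 : 0 <= (T.+2%:R)^-1 :> R by rewrite invr_ge0 ler0n.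
have r2 : 0 <= (1 - rho) ^+ 2 by exact: sqr_ge0.
have rr2 : 0 <= rho ^+ 2 by exact: sqr_ge0.
set e := (T.+2%:R)^-1 in e0 *.
set q := (1 - rho) ^+ 2 in r2 *.
set p := rho ^+ 2 in rr2 *.
have w1 : 0 <= 1 - th <= 1 by apply/andP; split; lra.
have A : 0 <= (h + b) * q by rewrite mulr_ge0 // ltW.
have B : 0 <= (h + b) * p by rewrite mulr_ge0 // ltW.
move: A B; set Aq := (h + b) * q; set Ap := (h + b) * p => A B.
have -> : (p + q) * (h + b) = Ap + Aq by rewrite /Ap /Aq; ring.
have C : Aq * (1 - th) <= Aq by move/andP: w1 => [w1 w2]; nra.
have D : 0 <= Aq * (1 - th) by move/andP: w1 => [w1 w2]; nra.
nra.
Qed.
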